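(* Let $n\geq 1$ and $m\geq 2$, and let $H_1$ and $H_2$ be the components of $R_t(T(2n+1,2m))$ containing $M_1=E_1\cup E_3\cup\cdots\cup E_{2m-1}$ and $M_2=E_2\cup E_4\cup\cdots\cup E_{2m}$ respectively. Then $H_1$ and $H_2$ are isomorphic.
   Context: $T(2n+1,2m)$ is the graph with vertices $(u_i,v_j)$, $i\in\mathbb{Z}_{2m}$, $j\in\mathbb{Z}_{2n+1}$, where $(u_i,v_j)$ is adjacent to $(u_{i+1},v_j)$ and $(u_i,v_{j+1})$, cellularly embedded in the torus with faces the $4$-cycles $(u_i,v_j)(u_{i+1},v_j)(u_{i+1},v_{j+1})(u_i,v_{j+1})$. For $1\le i\le 2m$, $E_i=\{(u_i,v_j)(u_{i+1},v_j):1\le j\le 2n+1\}$ (index mod $2m$). The total resonance graph $R_t(G)$ has the perfect matchings as vertices, two perfect matchings $M,M'$ being adjacent iff $M\oplus M'$ is exactly the boundary of one face. (These are distinct components, and they are the only two components.) *)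

(* Defs.v *)
From mathcomp Require Import all_boot.
Set Implicit Arguments. Unset Strict Implicit. Unset Printing Implicit Defensive.

(* Torus grid T(q, p): vertices (u_i, v_j), i in Z_p, j in Z_q (0-based).
   (u_i,v_j) ~ (u_{i+1},v_j)  ("u-edge", tag false)
   (u_i,v_j) ~ (u_i,v_{j+1})  ("v-edge", tag true).
   An edge is encoded by its "lower" endpoint and its direction.
   For p >= 3 and q >= 3 this encoding is a bijection with the edge set
   (no loops, no parallel edges). *)
Definition tvert (p q : nat) := ('I_p * 'I_q)%type.
Definition tedge (p q : nat) := (tvert p q * bool)%type.

Definition tends p q (e : tedge p q) : tvert p q * tvert p q :=
  let: ((i, j), d) := e in
  if d then ((i, j), (i, ordS j)) else ((i, j), (ordS i, j)).

Definition incident p q (x : tvert p q) (e : tedge p q) : bool :=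
  (x == (tends e).1) || (x == (tends e).2).

Definition perfect_matching p q (M : {set tedge p q}) : bool :=
  [forall x : tvert p q, #|[set e in M | incident x e]| == 1].

Definition face_boundary p q (f : tvert p q) : {set tedge p q} :=
  let: (i, j) := f in
  [set ((i, j), false); ((i, ordS j), false); ((i, j), true); ((ordS i, j), true)].

Definition symdiff (T : finType) (A B : {set T}) : {set T} := (A :\: B) :|: (B :\: A).

Definition rt_adj p q : rel {set tedge p q} := fun M M' =>
  [&& perfect_matching M, perfect_matching M' &
      [exists f : tvert p q, symdiff M M' == face_boundary f]].

Definition rt_component p q (M : {set tedge p q}) : {set {set tedge p q}} :=
  [set M' | perfect_matching M && connect (@rt_adj p q) M M'].

(* E_i = {(u_i,v_j)(u_{i+1},v_j) : j}, with 0-based index i *)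
Definition Elayer p q (i : 'I_p) : {set tedge p q} :=
  [set ((i, j), false) | j : 'I_q].

(* M_1 = E_1 ∪ E_3 ∪ ... (1-based) = union of layers with even 0-based index;
   M_2 = E_2 ∪ E_4 ∪ ... = odd 0-based index *)
Definition Mone p q : {set tedge p q} := \bigcup_(i : 'I_p | ~~ odd i) Elayer q i.
Definition Mtwo p q : {set tedge p q} := \bigcup_(i : 'I_p | odd i) Elayer q i.

Definition induced_iso (T : finType) (r : rel T) (V1 V2 : {set T}) : Prop :=
  exists f : T -> T,
    [/\ {in V1 &, injective f}, f @: V1 = V2 &
        {in V1 &, forall x y, r x y = r (f x) (f y)}].

(* Main.v *)
Require Import Defs.
From mathcomp Require Import all_boot.
Set Implicit Arguments. Unset Strict Implicit. Unset Printing Implicit Defensive.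

Section Shift.
Variables p q : nat.

Definition sv (x : tvert p q) : tvert p q := (ordS x.1, x.2).
Definition svi (x : tvert p q) : tvert p q := (ord_pred x.1, x.2).
Definition se (e : tedge p q) : tedge p q := (sv e.1, e.2).
Definition sei (e : tedge p q) : tedge p q := (svi e.1, e.2).

Lemma svK : cancel sv svi.
Proof. by case=> i j; rewrite /sv /svi /= ordSK. Qed.
Lemma sviK : cancel svi sv.
Proof. by case=> i j; rewrite /sv /svi /= ord_predK. Qed.
Lemma seK : cancel se sei.
Proof. by case=> x d; rewrite /se /sei /= svK. Qed.
Lemma seiK : cancel sei se.
Proof. by case=> x d; rewrite /se /sei /= sviK. Qed.
Lemma se_inj : injective se. Proof. exact: can_inj seK. Qed.
Lemma sv_inj : injective sv. Proof. exact: can_inj svK. Qed.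

Lemma mem_se (A : {set tedge p q}) X : (X \in se @: A) = (sei X \in A).
Proof. by rewrite -{1}(seiK X) mem_imset //; exact: se_inj. Qed.

Lemma tends_se e : tends (se e) = (sv (tends e).1, sv (tends e).2).
Proof. by case: e => [[i j] [|]]. Qed.

Lemma incident_se x e : incident (sv x) (se e) = incident x e.
Proof.
by rewrite /incident tends_se /= !(inj_eq sv_inj).
Qed.

Lemma card_inc_se (M : {set tedge p q}) x :
  #|[set e in se @: M | incident (sv x) e]| = #|[set e in M | incident x e]|.
Proof.
have -> : [set e in se @: M | incident (sv x) e] = se @: [set e in M | incident x e].
  apply/setP => X; rewrite mem_se !inE mem_se; congr (_ && _).
  by rewrite -(incident_se x) seiK.
by rewrite card_imset //; exact: se_inj.
Qed.

Lemma pm_se (M : {set tedge p q}) : perfect_matching (se @: M) = perfect_matching M.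
Proof.
apply/forallP/forallP => H x.
  by rewrite -card_inc_se; exact: H.
by rewrite -(sviK x) card_inc_se; exact: H.
Qed.

Lemma symdiff_se (A B : {set tedge p q}) : symdiff (se @: A) (se @: B) = se @: symdiff A B.
Proof. by apply/setP => X; rewrite /symdiff mem_se !inE !mem_se. Qed.

Lemma fb_se (f : tvert p q) : face_boundary (sv f) = se @: face_boundary f.
Proof. by case: f => i j; rewrite /face_boundary /= !imsetU !imset_set1. Qed.

Lemma rt_se (M M' : {set tedge p q}) : rt_adj (se @: M) (se @: M') = rt_adj M M'.
Proof.
rewrite /rt_adj !pm_se symdiff_se; congr [&& _, _ & _].
apply/existsP/existsP => [[f /eqP Hf]|[f /eqP Hf]].
  exists (svi f); apply/eqP; apply: (imset_inj se_inj).
  by rewrite -fb_se sviK.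
by exists (sv f); rewrite Hf fb_se.
Qed.

End Shift.
Arguments sv {p q}. Arguments svi {p q}. Arguments se {p q}. Arguments sei {p q}.

Lemma connect_homo (T : finType) (r : rel T) (h : T -> T) :
  (forall x y, r x y -> r (h x) (h y)) ->
  forall x y, connect r x y -> connect r (h x) (h y).
Proof.
move=> H x y /connectP [s ps ->].
elim: s x ps => [|z s IH] x /= => [_|/andP [rxz pzs]]; first exact: connect0.
exact: connect_trans (connect1 (H _ _ rxz)) (IH z pzs).
Qed.

Lemma mem_Mone p q (e : tedge p q) : (e \in Mone p q) = (~~ e.2) && ~~ odd e.1.1.
Proof.
case: e => [[i j] d] /=; apply/bigcupP/andP => [[k hk /imsetP [j' _ [-> _ ->]]] | [hd hi]].
  by [].
by exists i => //; apply/imsetP; exists j => //; case: d hd.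
Qed.

Lemma mem_Mtwo p q (e : tedge p q) : (e \in Mtwo p q) = (~~ e.2) && odd e.1.1.
Proof.
case: e => [[i j] d] /=; apply/bigcupP/andP => [[k hk /imsetP [j' _ [-> _ ->]]] | [hd hi]].
  by [].
by exists i => //; apply/imsetP; exists j => //; case: d hd.
Qed.

Lemma odd_ordS m (i : 'I_(2 * m)) : odd (ordS i) = ~~ odd i.
Proof.
rewrite /ordS /=; have hi := ltn_ord i.
case: (ltnP i.+1 (2 * m)) => h.
  by rewrite modn_small //= .
have e : i.+1 = 2 * m by apply/eqP; rewrite eqn_leq h hi.
rewrite e modnn /=.
have : odd (i.+1) = false by rewrite e oddM.
by rewrite /= => /negbFE ->.
Qed.

Theorem theorem4p4 (n m : nat) (hn : 1 <= n) (hm : 2 <= m) :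
  induced_iso (@rt_adj (2 * m) (2 * n + 1))
    (rt_component (@Mone (2 * m) (2 * n + 1)))
    (rt_component (@Mtwo (2 * m) (2 * n + 1))).
Proof.
set p := 2 * m; set q := 2 * n + 1.
pose f := fun M : {set tedge p q} => se @: M.
pose g := fun M : {set tedge p q} => sei @: M.
have fK : cancel f g.
  by move=> M; rewrite /f /g -imset_comp (eq_imset _ (@seK p q)) imset_id.
have gK : cancel g f.
  by move=> M; rewrite /f /g -imset_comp (eq_imset _ (@seiK p q)) imset_id.
have fr : forall x y, rt_adj (f x) (f y) = rt_adj x y by move=> x y; exact: rt_se.
have fc : forall x y, connect (@rt_adj p q) (f x) (f y) = connect (@rt_adj p q) x y.
  move=> x y; apply/idP/idP; last by apply: connect_homo => a b; rewrite fr.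
  move=> H; rewrite -(fK x) -(fK y); apply: connect_homo H => a b.
  by rewrite -{1}(gK a) -{1}(gK b) fr.
have M12 : f (Mone p q) = Mtwo p q.
  apply/setP => X; rewrite /f mem_se mem_Mone mem_Mtwo /=.
  have h := odd_ordS (ord_pred X.1.1); rewrite ord_predK in h.
  change ((~~ X.2) && ~~ odd (ord_pred X.1.1) = (~~ X.2) && odd X.1.1).
  by rewrite h.
exists f; split.
- by move=> x y _ _; exact: (can_inj fK).
- apply/setP => X; rewrite -{1}(gK X) mem_imset; last exact: (can_inj fK).
  by rewrite /rt_component !inE -M12 pm_se -{2}(gK X) fc.
- by move=> x y _ _; rewrite fr.
Qed.
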